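(* Let $[a,b]\subset\mathbb{R}$ be a compact interval and let $E\subset[a,b]$ be a set of Lebesgue measure zero with $a,b\notin E$. Let $F$ be a real valued function defined and differentiable on $[a,b]\setminus E$, with derivative $f$ there (at points of $E$, $F$ and $f$ may take the values $\pm\infty$ or be undefined). Define $F_{ex},f_{ex}:[a,b]\to\mathbb{R}$ by $F_{ex}(x)=F(x)$, $f_{ex}(x)=f(x)$ for $x\in[a,b]\setminus E$ and $F_{ex}(x)=f_{ex}(x)=0$ for $x\in E$. Suppose $F$ is basically summable ($\mathrm{BS}_\delta$) on $E$ to a real number $\Re$, i.e. for every $\varepsilon>0$ there is a gauge $\delta:[a,b]\to\mathbb{R}_+$ such that $$\Big|\sum_{([a_i,b_i],x_i)\in P|_E}\big(F_{ex}(b_i)-F_{ex}(a_i)\big)-\Re\Big|<\varepsilon$$ for every $\delta$-fine tagged partition $P$ of $[a,b]$. Then $f_{ex}$ is generalized Riemann integrable on $[a,b]$, i.e. there is a real number $\mathcal{F}=\mathcal{R}\text{-}\int_a^b f_{ex}(x)\,dx$ such that for every $\varepsilon>0$ there is a gauge $\delta:[a,b]\to\mathbb{R}_+$ with $\big|\sum_i f_{ex}(x_i)(b_i-a_i)-\mathcal{F}\big|<\varepsilon$ for every $\delta$-fine tagged partition $([a_i,b_i],x_i)_i$ of $[a,b]$; and moreover $$\int_a^b f(x)\,dx = \mathcal{R}\text{-}\int_a^b f_{ex}(x)\,dx+\Re,$$ where $\int_a^b f(x)\,dx$ denotes $\Delta F([a,b])=F(b)-F(a)$.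
   Context: A tagged partition $P$ of $[a,b]$ is a finite collection of interval-point pairs $([a_i,b_i],x_i)_{i\le\nu}$ such that the compact intervals $[a_i,b_i]$ are non-overlapping, their union is $[a,b]$, and each tag $x_i\in[a,b]$. A gauge is a function $\delta:[a,b]\to\mathbb{R}_+$; a pair $([a_i,b_i],x_i)$ is $\delta$-fine if $[a_i,b_i]\subseteq(x_i-\delta(x_i),x_i+\delta(x_i))$, and a partition is $\delta$-fine if all its pairs are. For $E\subseteq[a,b]$, the restriction $P|_E$ is the set of pairs $([a_i,b_i],x_i)\in P$ with $[a_i,b_i]\cap E\neq\emptyset$ and $x_i\in E$. In the paper, the integral of $f$ over a compact interval $I=[u,v]$ is defined to be the value $\Delta F(I)=F(v)-F(u)$ of the interval function associated to the antiderivative $F$ of $f$. *)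

(* Defs.v *)
From Stdlib Require Import Reals List Classical ClassicalEpsilon Lra.
Open Scope R_scope.

(* A tagged interval-point pair ([u,v], x) is encoded as ((u, v), x). *)

Definition null_set (E : R -> Prop) : Prop :=
  forall eps : R, 0 < eps ->
    exists c d : nat -> R,
      (forall n, c n <= d n) /\
      (forall x, E x -> exists n, c n < x < d n) /\
      (forall N, sum_f_R0 (fun n => d n - c n) N <= eps).

Definition tagged_partition (a b : R) (P : list (R * R * R)) : Prop :=
  (forall u v x, In (u, v, x) P -> u < v /\ u <= x <= v) /\
  (forall i j, (i < length P)%nat -> (j < length P)%nat -> i <> j ->
     forall y,
       ~ (fst (fst (nth i P (0,0,0))) < y < snd (fst (nth i P (0,0,0))) /\
          fst (fst (nth j P (0,0,0))) < y < snd (fst (nth j P (0,0,0))))) /\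
  (forall y, a <= y <= b <-> exists u v x, In (u, v, x) P /\ u <= y <= v).

Definition gauge (a b : R) (delta : R -> R) : Prop :=
  forall x, a <= x <= b -> 0 < delta x.

Definition fine (delta : R -> R) (P : list (R * R * R)) : Prop :=
  forall u v x, In (u, v, x) P -> x - delta x < u /\ v < x + delta x.

Definition pdec (Q : Prop) : bool :=
  if excluded_middle_informative Q then true else false.

Definition ext (E : R -> Prop) (g : R -> R) (x : R) : R :=
  if pdec (E x) then 0 else g x.

Definition riemann_sum (g : R -> R) (P : list (R * R * R)) : R :=
  fold_right (fun p s => g (snd p) * (snd (fst p) - fst (fst p)) + s) 0 P.

(* Sum over the restriction P|_E of G(v_i) - G(u_i): pairs with
   [u_i,v_i] meeting E and tag x_i in E. *)
Definition restr_sum (E : R -> Prop) (G : R -> R) (P : list (R * R * R)) : R :=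
  fold_right (fun p s =>
     (if pdec ((exists y, fst (fst p) <= y <= snd (fst p) /\ E y) /\ E (snd p))
      then G (snd (fst p)) - G (fst (fst p)) else 0) + s) 0 P.

Definition BS_delta (a b : R) (E : R -> Prop) (F : R -> R) (Re : R) : Prop :=
  forall eps, 0 < eps -> exists delta, gauge a b delta /\
    forall P, tagged_partition a b P -> fine delta P ->
      Rabs (restr_sum E (ext E F) P - Re) < eps.

Definition GR_integral (a b : R) (g : R -> R) (I : R) : Prop :=
  forall eps, 0 < eps -> exists delta, gauge a b delta /\
    forall P, tagged_partition a b P -> fine delta P ->
      Rabs (riemann_sum g P - I) < eps.

(* F (defined on D) is differentiable on D with derivative f, the
   difference quotient being taken over points of the domain D
   (one-sided at the endpoints a, b). *)
Definition deriv_on (D : R -> Prop) (F f : R -> R) : Prop :=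
  forall x, D x -> forall eps, 0 < eps -> exists del, 0 < del /\
    forall y, D y -> Rabs (y - x) < del ->
      Rabs (F y - F x - f x * (y - x)) <= eps * Rabs (y - x).

(* Main.v *)
Require Import Defs.
From Stdlib Require Import Reals Lra Lia List ClassicalEpsilon Classical Rtopology.
Open Scope R_scope.

Definition lsum {A : Type} (h : A -> R) (l : list A) : R :=
  fold_right (fun p s => h p + s) 0 l.

Lemma lsum_app {A} (h : A -> R) l1 l2 : lsum h (l1 ++ l2) = lsum h l1 + lsum h l2.
Proof. induction l1; simpl; [lra|]. unfold lsum in *; simpl; rewrite IHl1; lra. Qed.

Lemma lsum_cons {A} (h : A -> R) p l : lsum h (p :: l) = h p + lsum h l.
Proof. reflexivity. Qed.

Lemma lsum_flat_map {A B} (h : B -> R) (g : A -> list B) l :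
  lsum h (flat_map g l) = lsum (fun p => lsum h (g p)) l.
Proof. induction l; simpl; [reflexivity|]. rewrite lsum_app, IHl. reflexivity. Qed.

Lemma lsum_le {A} (h1 h2 : A -> R) l :
  (forall p, In p l -> h1 p <= h2 p) -> lsum h1 l <= lsum h2 l.
Proof. induction l; intros H; simpl; [lra|].
  unfold lsum in *; simpl. assert (h1 a <= h2 a) by (apply H; simpl; auto).
  assert (fold_right (fun p s => h1 p + s) 0 l <= fold_right (fun p s => h2 p + s) 0 l)
   by (apply IHl; intros; apply H; simpl; auto). lra. Qed.

Lemma lsum_nonneg {A} (h : A -> R) l : (forall p, In p l -> 0 <= h p) -> 0 <= lsum h l.
Proof. intros H. replace 0 with (lsum (fun _ : A => 0) l).
  apply lsum_le; auto. clear H. induction l; [reflexivity|]. rewrite lsum_cons, IHl; lra. Qed.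

Lemma lsum_minus {A} (h1 h2 : A -> R) l : lsum h1 l - lsum h2 l = lsum (fun p => h1 p - h2 p) l.
Proof. induction l; [unfold lsum; simpl; lra|]. rewrite !lsum_cons. rewrite <- IHl. lra. Qed.

Lemma lsum_abs {A} (h : A -> R) l : Rabs (lsum h l) <= lsum (fun p => Rabs (h p)) l.
Proof. induction l. unfold lsum; simpl; rewrite Rabs_R0; lra.
  rewrite !lsum_cons. eapply Rle_trans. apply Rabs_triang. lra. Qed.

Lemma lsum_const {A} (c : R) (l : list A) : lsum (fun _ => c) l = INR (length l) * c.
Proof. induction l. unfold lsum; simpl; lra. rewrite lsum_cons, IHl. simpl length.
  rewrite S_INR. lra. Qed.

Lemma cover_length : forall n (L : list (R*R)), length L = n ->
  (forall i, In i L -> fst i <= snd i) -> forall c0 d0, c0 <= d0 ->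
  (forall y, c0 <= y <= d0 -> exists i, In i L /\ fst i < y < snd i) ->
  d0 - c0 <= lsum (fun i => snd i - fst i) L.
Proof.
  induction n as [n IH] using (well_founded_induction Wf_nat.lt_wf).
  intros L HL Hle c0 d0 Hcd Hcov.
  destruct (Hcov d0) as [[ci di] [Hin Hi]]; [lra|]. simpl in Hi.
  destruct (in_split _ _ Hin) as [l1 [l2 ->]].
  assert (Hnn : 0 <= lsum (fun i => snd i - fst i) (l1 ++ l2)).
  { apply lsum_nonneg. intros p Hp. assert (In p (l1 ++ (ci,di) :: l2)).
    { apply in_app_or in Hp. apply in_or_app. simpl. tauto. }
    specialize (Hle p H). lra. }
  rewrite lsum_app, lsum_cons. simpl. rewrite lsum_app in Hnn.
  destruct (Rlt_dec ci c0).
  - lra.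
  - assert (ci - c0 <= lsum (fun i => snd i - fst i) (l1 ++ l2)).
    { apply (IH (length (l1 ++ l2))).
      + subst n. rewrite !length_app. simpl. lia.
      + reflexivity.
      + intros p Hp. apply Hle. apply in_app_or in Hp. apply in_or_app. simpl. tauto.
      + lra.
      + intros y Hy. destruct (Hcov y) as [p [Hp Hpy]]; [lra|].
        exists p. split; auto. apply in_app_or in Hp. apply in_or_app.
        destruct Hp as [Hp|[Hp|Hp]]; auto. subst p. simpl in Hpy. lra. }
    rewrite lsum_app in H. lra.
Qed.

Lemma lsum_seq (c d : nat -> R) M :
  lsum (fun i => snd i - fst i) (map (fun n => (c n, d n)) (seq 0 (S M)))
  = sum_f_R0 (fun n => d n - c n) M.
Proof.
  induction M. { unfold lsum; simpl; lra. }
  rewrite seq_S, map_app, lsum_app, IHM. simpl. unfold lsum; simpl. lra.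
Qed.

Lemma bound_nat (l : list R) : (forall r, In r l -> exists n, r = INR n) ->
  exists M, forall r n, In r l -> r = INR n -> (n <= M)%nat.
Proof.
  induction l as [|r0 l IH]; intros H.
  - exists 0%nat. intros r n [].
  - destruct IH as [M HM]. { intros; apply H; simpl; auto. }
    destruct (H r0) as [n0 Hn0]; [simpl; auto|].
    exists (Nat.max M n0). intros r n [Hr|Hr] Hrn.
    + subst. apply INR_eq in Hrn. subst. lia.
    + specialize (HM r n Hr Hrn). lia.
Qed.

Lemma null_no_interval (E : R -> Prop) c d : null_set E -> c < d ->
  exists y, c < y < d /\ ~ E y.
Proof.
  intros HN Hcd. apply NNPP. intro Hno.
  assert (HE : forall y, c < y < d -> E y).
  { intros y Hy. apply NNPP. intro HnE. apply Hno. exists y; auto. }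
  set (e := (d - c) / 4).
  assert (He : 0 < e) by (unfold e; lra).
  destruct (HN e He) as [cn [dn [Hle [Hcov Hsum]]]].
  assert (Hcf : forall r : R, (exists y, (fun r y => exists n, r = INR n /\ cn n < y < dn n) r y) ->
             (fun r => exists n, r = INR n) r).
  { intros r [y [n [Hr _]]]. exists n; auto. }
  set (fam := mkfamily (fun r => exists n, r = INR n)
                (fun r y => exists n, r = INR n /\ cn n < y < dn n) Hcf).
  destruct (compact_P3 (c + e) (d - e) fam) as [D [Hcov2 [l Hl]]].
  { split.
    - intros y Hy. destruct (Hcov y) as [n Hn]. { apply HE. unfold e in Hy. lra. }
      exists (INR n). simpl. exists n. auto.
    - intros r y [n [Hr Hy]].
      assert (Hp : 0 < Rmin (y - cn n) (dn n - y)).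
      { apply Rmin_case; lra. }
      exists (mkposreal _ Hp). intros z Hz. unfold disc in Hz. simpl in Hz.
      exists n. split; auto.
      apply Rabs_def2 in Hz. pose proof (Rmin_l (y - cn n) (dn n - y)).
      pose proof (Rmin_r (y - cn n) (dn n - y)). lra. }
  destruct (bound_nat l) as [M HM].
  { intros r Hr. apply Hl in Hr. destruct Hr as [[n Hn] _]. exists n; auto. }
  assert (Hlen := cover_length _ (map (fun n => (cn n, dn n)) (seq 0 (S M))) eq_refl).
  rewrite lsum_seq in Hlen.
  specialize (Hsum M).
  assert (d - e - (c + e) <= sum_f_R0 (fun n => dn n - cn n) M).
  { apply Hlen.
    - intros i Hi. apply in_map_iff in Hi. destruct Hi as [n [<- _]]. simpl. apply Hle.
    - unfold e; lra.
    - intros y Hy. destruct (Hcov2 y Hy) as [r [[n [Hr Hny]] HD]].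
      exists (cn n, dn n). split; auto.
      apply in_map_iff. exists n. split; auto. apply in_seq.
      assert (In r l). { apply Hl. split; auto. exists n; auto. }
      specialize (HM r n H Hr). lia. }
  unfold e in *. lra.
Qed.

Definition pu (p : R*R*R) := fst (fst p).
Definition pv (p : R*R*R) := snd (fst p).
Definition pt (p : R*R*R) := snd p.

Definition TP (a b : R) (P : list (R*R*R)) : Prop :=
  (forall p, In p P -> pu p < pv p /\ pu p <= pt p <= pv p) /\ NoDup P /\
  (forall p q, In p P -> In q P -> p <> q -> forall y,
      ~ (pu p < y < pv p /\ pu q < y < pv q)) /\
  (forall y, a <= y <= b <-> exists p, In p P /\ pu p <= y <= pv p).

Lemma tp_iff a b P : tagged_partition a b P <-> TP a b P.
Proof.
  split.
  - intros [H1 [H2 H3]].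
    assert (H1' : forall p, In p P -> pu p < pv p /\ pu p <= pt p <= pv p).
    { intros [[u v] x] Hp. apply H1 in Hp. exact Hp. }
    split; [exact H1'|]. split; [|split].
    + apply (NoDup_nth P (0,0,0)). intros i j Hi Hj Heq.
      destruct (Nat.eq_dec i j) as [|Hne]; auto. exfalso.
      specialize (H1' _ (nth_In P (0,0,0) Hi)).
      apply (H2 i j Hi Hj Hne ((pu (nth i P (0,0,0)) + pv (nth i P (0,0,0)))/2)).
      rewrite <- Heq. unfold pu, pv in *. lra.
    + intros p q Hp Hq Hne y.
      destruct (In_nth _ _ (0,0,0) Hp) as [i [Hi <-]].
      destruct (In_nth _ _ (0,0,0) Hq) as [j [Hj <-]].
      apply H2; auto. intros ->. auto.
    + intros y. rewrite H3. split.
      * intros [u [v [x [Hin Hy]]]]. exists (u,v,x). auto.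
      * intros [[[u v] x] [Hin Hy]]. exists u, v, x. auto.
  - intros [H1 [H2 [H3 H4]]]. split; [|split].
    + intros u v x Hin. apply (H1 _ Hin).
    + intros i j Hi Hj Hne y.
      apply H3; try apply nth_In; auto.
      intro Heq. apply Hne. apply (proj1 (NoDup_nth P (0,0,0)) H2 i j Hi Hj Heq).
    + intros y. rewrite H4. split.
      * intros [[[u v] x] [Hin Hy]]. exists u, v, x. auto.
      * intros [u [v [x [Hin Hy]]]]. exists (u,v,x). auto.
Qed.

Lemma max_exists (P : list (R*R*R)) : P <> nil ->
  exists p, In p P /\ forall q, In q P -> pv q <= pv p.
Proof.
  induction P as [|p0 P IH]; intros Hne; [congruence|].
  destruct P as [|p1 P'].
  - exists p0. split; [simpl; auto|]. intros q [<-|[]]. lra.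
  - destruct IH as [p [Hp Hmax]]; [discriminate|].
    destruct (Rle_dec (pv p0) (pv p)).
    + exists p. split; [right; auto|]. intros q [<-|Hq]; auto.
    + exists p0. split; [left; auto|]. intros q [<-|Hq]; [lra|].
      specialize (Hmax q Hq). lra.
Qed.

Lemma list_lt_max (l : list (R*R*R)) (c m0 : R) : m0 < c ->
  (forall q, In q l -> pv q < c) -> exists m, m < c /\ m0 <= m /\ forall q, In q l -> pv q <= m.
Proof.
  intros Hm0. induction l as [|q0 l IH]; intros H.
  - exists m0. split; [lra|]. split; [lra|]. intros q [].
  - destruct IH as [m [Hm1 [Hm2 Hm3]]]. { intros; apply H; simpl; auto. }
    exists (Rmax m (pv q0)). split; [|split].
    + apply Rmax_lub_lt; auto. apply H; simpl; auto.
    + eapply Rle_trans; [|apply Rmax_l]; auto.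
    + intros q [<-|Hq]. apply Rmax_r. eapply Rle_trans; [apply Hm3; auto|apply Rmax_l].
Qed.

Lemma telescope (G : R -> R) : forall n P a b, length P = n -> a < b -> TP a b P ->
  lsum (fun p => G (pv p) - G (pu p)) P = G b - G a.
Proof.
  induction n as [n IH] using (well_founded_induction Wf_nat.lt_wf).
  intros P a b HL Hab [H1 [H2 [H3 H4]]].
  assert (HP : P <> nil).
  { intros ->. destruct (proj1 (H4 a)) as [p [[] _]]. lra. }
  destruct (max_exists P HP) as [ps [Hps Hmax]].
  assert (Hin_ab : forall q, In q P -> a <= pu q /\ pv q <= b).
  { intros q Hq. destruct (H1 q Hq). split.
    - apply (proj2 (H4 (pu q))). exists q. split; auto. lra.
    - apply (proj2 (H4 (pv q))). exists q. split; auto. lra. }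
  assert (Hvb : pv ps = b).
  { destruct (proj1 (H4 b)) as [q [Hq Hqb]]. lra.
    specialize (Hmax q Hq). specialize (Hin_ab ps Hps). lra. }
  destruct (in_split _ _ Hps) as [l1 [l2 HPeq]].
  assert (HinP : forall q, In q (l1 ++ l2) -> In q P).
  { intros q Hq. rewrite HPeq. apply in_app_or in Hq. apply in_or_app. simpl. tauto. }
  assert (Hneq : forall q, In q (l1 ++ l2) -> q <> ps).
  { intros q Hq ->. rewrite HPeq in H2. apply NoDup_remove_2 in H2. auto. }
  destruct (H1 ps Hps) as [Hps1 _].
  assert (Hrest : forall q, In q (l1 ++ l2) -> pv q <= pu ps).
  { intros q Hq. destruct (Rle_dec (pv q) (pu ps)) as [|Hnot]; auto. exfalso.
    destruct (H1 q (HinP q Hq)) as [Hq1 _]. specialize (Hin_ab q (HinP q Hq)).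
    apply (H3 q ps (HinP q Hq) Hps (Hneq q Hq) ((Rmax (pu q) (pu ps) + pv q)/2)).
    pose proof (Rmax_l (pu q) (pu ps)). pose proof (Rmax_r (pu q) (pu ps)).
    assert (Rmax (pu q) (pu ps) < pv q) by (apply Rmax_lub_lt; lra). lra. }
  assert (Hsplit : lsum (fun p => G (pv p) - G (pu p)) P =
     lsum (fun p => G (pv p) - G (pu p)) (l1 ++ l2) + (G b - G (pu ps))).
  { rewrite HPeq, !lsum_app, lsum_cons, Hvb. lra. }
  rewrite Hsplit.
  destruct (Rle_dec (pu ps) a) as [Hle|Hgt].
  - assert (Hnil : l1 ++ l2 = nil).
    { destruct (l1 ++ l2) as [|q l] eqn:Heq; auto. exfalso.
      assert (Hq : In q (q :: l)) by (simpl; auto).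
      specialize (Hrest q Hq). destruct (H1 q (HinP q Hq)).
      specialize (Hin_ab q (HinP q Hq)). lra. }
    rewrite Hnil. assert (pu ps = a) by (specialize (Hin_ab ps Hps); lra).
    rewrite H. unfold lsum; simpl; lra.
  - assert (Hcov1 : forall y, a <= y < pu ps -> exists p, In p (l1 ++ l2) /\ pu p <= y <= pv p).
    { intros y Hy. destruct (proj1 (H4 y)) as [q [Hq Hqy]]. lra.
      exists q. split; auto. rewrite HPeq in Hq. apply in_app_or in Hq.
      apply in_or_app. destruct Hq as [Hq|[Hq|Hq]]; auto. subst q. lra. }
    assert (HIH : lsum (fun p => G (pv p) - G (pu p)) (l1 ++ l2) = G (pu ps) - G a).
    2:{ rewrite HIH; lra. }
    apply (IH (length (l1 ++ l2))); [ | reflexivity | lra | ].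
    + subst n. rewrite HPeq, !length_app. simpl. lia.
    + split; [|split; [|split]].
      * intros p Hp. apply H1, HinP; auto.
      * rewrite HPeq in H2. apply NoDup_remove_1 in H2. auto.
      * intros p q Hp Hq. apply H3; apply HinP; auto.
      * intros y. split.
        -- intros Hy. destruct (Rlt_dec y (pu ps)). apply Hcov1; lra.
           assert (y = pu ps) by lra. subst y.
           apply NNPP. intros Hno.
           assert (Hlt : forall q, In q (l1 ++ l2) -> pv q < pu ps).
           { intros q Hq. destruct (Req_dec (pv q) (pu ps)) as [He|He].
             - exfalso. apply Hno. exists q. split; auto. destruct (H1 q (HinP q Hq)). lra.
             - specialize (Hrest q Hq). lra. }
           assert (Hgt2 : a < pu ps) by lra. destruct (list_lt_max _ _ _ Hgt2 Hlt) as [m [Hm1 [Hm2 Hm3]]].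
           destruct (Hcov1 ((m + pu ps)/2)) as [q [Hq Hqy]]. lra.
           specialize (Hm3 q Hq). lra.
        -- intros [q [Hq Hqy]]. specialize (Hrest q Hq). specialize (Hin_ab q (HinP q Hq)). lra.
Qed.

Definition interior_disj (q1 q2 : R*R*R) : Prop :=
  forall y, ~ (pu q1 < y < pv q1 /\ pu q2 < y < pv q2).

Lemma NoDup_fm (S : R*R*R -> list (R*R*R)) : forall P, NoDup P ->
  (forall p, In p P -> NoDup (S p)) ->
  (forall p1 p2 q, In p1 P -> In p2 P -> p1 <> p2 -> In q (S p1) -> In q (S p2) -> False) ->
  NoDup (flat_map S P).
Proof.
  induction P as [|p P IH]; intros HND HS Hdis; simpl; [constructor|].
  apply NoDup_cons_iff in HND. destruct HND as [Hnin HND].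
  apply NoDup_app.
  - apply HS; simpl; auto.
  - apply IH; auto. intros; apply HS; simpl; auto.
    intros p1 p2 q H1 H2. apply Hdis; simpl; auto.
  - intros q Hq Hq2. apply in_flat_map in Hq2. destruct Hq2 as [p2 [Hp2 Hq2]].
    apply (Hdis p p2 q); simpl; auto. intros ->; auto.
Qed.

Lemma refine_TP a b P (S : R*R*R -> list (R*R*R)) :
  TP a b P ->
  (forall p, In p P -> NoDup (S p) /\
     (forall q, In q (S p) -> pu q < pv q /\ pu q <= pt q <= pv q /\ pu p <= pu q /\ pv q <= pv p) /\
     (forall q1 q2, In q1 (S p) -> In q2 (S p) -> q1 <> q2 -> interior_disj q1 q2) /\
     (forall y, pu p <= y <= pv p -> exists q, In q (S p) /\ pu q <= y <= pv q)) ->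
  TP a b (flat_map S P).
Proof.
  intros [H1 [H2 [H3 H4]]] HS.
  split; [|split; [|split]].
  - intros q Hq. apply in_flat_map in Hq. destruct Hq as [p [Hp Hq]].
    destruct (HS p Hp) as [_ [Hb _]]. destruct (Hb q Hq) as [? [? _]]. auto.
  - apply NoDup_fm; auto. intros; apply HS; auto.
    intros p1 p2 q Hp1 Hp2 Hne Hq1 Hq2.
    destruct (HS p1 Hp1) as [_ [Hb1 _]]. destruct (HS p2 Hp2) as [_ [Hb2 _]].
    specialize (Hb1 q Hq1). specialize (Hb2 q Hq2).
    apply (H3 p1 p2 Hp1 Hp2 Hne ((pu q + pv q)/2)). lra.
  - intros q1 q2 Hq1 Hq2 Hne y.
    apply in_flat_map in Hq1. destruct Hq1 as [p1 [Hp1 Hq1]].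
    apply in_flat_map in Hq2. destruct Hq2 as [p2 [Hp2 Hq2]].
    destruct (HS p1 Hp1) as [_ [Hb1 [Hd1 _]]]. destruct (HS p2 Hp2) as [_ [Hb2 _]].
    specialize (Hb1 q1 Hq1). specialize (Hb2 q2 Hq2).
    destruct (classic (p1 = p2)) as [<-|Hpne].
    + apply (Hd1 q1 q2 Hq1 Hq2 Hne y).
    + intros Hy. apply (H3 p1 p2 Hp1 Hp2 Hpne y). lra.
  - intros y. rewrite H4. split.
    + intros [p [Hp Hy]]. destruct (HS p Hp) as [_ [_ [_ Hc]]].
      destruct (Hc y Hy) as [q [Hq Hqy]]. exists q. split; auto.
      apply in_flat_map. exists p; auto.
    + intros [q [Hq Hy]]. apply in_flat_map in Hq. destruct Hq as [p [Hp Hq]].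
      destruct (HS p Hp) as [_ [Hb _]]. specialize (Hb q Hq). exists p. split; auto. lra.
Qed.

Definition split3 (eu ev : bool) (u u' x v' v : R) : list (R*R*R) :=
  (if eu then (u,u',u) :: nil else nil) ++
  ((if eu then u' else u), (if ev then v' else v), x) ::
  (if ev then (v',v,v) :: nil else nil).

Lemma in_split3 eu ev u u' x v' v q : In q (split3 eu ev u u' x v' v) <->
  (eu = true /\ q = (u,u',u)) \/ q = ((if eu then u' else u), (if ev then v' else v), x)
  \/ (ev = true /\ q = (v',v,v)).
Proof.
  unfold split3. destruct eu, ev; simpl; intuition congruence.
Qed.

Lemma lsum_split3 (h : R*R*R -> R) eu ev u u' x v' v :
  lsum h (split3 eu ev u u' x v' v) =
  (if eu then h (u,u',u) else 0) + h ((if eu then u' else u), (if ev then v' else v), x)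
  + (if ev then h (v',v,v) else 0).
Proof. unfold split3; destruct eu, ev; unfold lsum; simpl; lra. Qed.

Lemma split3_props eu ev u u' x v' v : u < v -> u <= x <= v ->
  (eu = true -> u < u' < x) -> (ev = true -> x < v' < v) ->
  let p := (u,v,x) in let S := split3 eu ev u u' x v' v in
  NoDup S /\
  (forall q, In q S -> pu q < pv q /\ pu q <= pt q <= pv q /\ pu p <= pu q /\ pv q <= pv p) /\
  (forall q1 q2, In q1 S -> In q2 S -> q1 <> q2 -> interior_disj q1 q2) /\
  (forall y, pu p <= y <= pv p -> exists q, In q S /\ pu q <= y <= pv q).
Proof.
  intros Huv Hx Hu Hv p S. unfold p, S, split3, interior_disj, pu, pv, pt.
  destruct eu, ev; simpl;
    (try specialize (Hu eq_refl)); (try specialize (Hv eq_refl)).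
  - split; [repeat constructor; simpl; intros Hc; repeat destruct Hc as [Hc|Hc];
      try inversion Hc; subst; try lra; auto|].
    split; [intros q Hq; repeat destruct Hq as [Hq|Hq]; subst; simpl; try lra; contradiction|].
    split; [intros q1 q2 Hq1 Hq2 Hne y0; repeat destruct Hq1 as [Hq1|Hq1];
      repeat destruct Hq2 as [Hq2|Hq2]; subst; simpl; try lra; try contradiction; congruence|].
    intros y Hy. destruct (Rle_dec y u').
    + exists (u,u',u); simpl; split; auto; lra.
    + destruct (Rle_dec y v'). exists (u',v',x); simpl; split; auto; lra.
      exists (v',v,v); simpl; split; auto; lra.
  - split; [repeat constructor; simpl; intros Hc; repeat destruct Hc as [Hc|Hc];
      try inversion Hc; subst; try lra; auto|].
    split; [intros q Hq; repeat destruct Hq as [Hq|Hq]; subst; simpl; try lra; contradiction|].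
    split; [intros q1 q2 Hq1 Hq2 Hne y0; repeat destruct Hq1 as [Hq1|Hq1];
      repeat destruct Hq2 as [Hq2|Hq2]; subst; simpl; try lra; try contradiction; congruence|].
    intros y Hy. destruct (Rle_dec y u').
    + exists (u,u',u); simpl; split; auto; lra.
    + exists (u',v,x); simpl; split; auto; lra.
  - split; [repeat constructor; simpl; intros Hc; repeat destruct Hc as [Hc|Hc];
      try inversion Hc; subst; try lra; auto|].
    split; [intros q Hq; repeat destruct Hq as [Hq|Hq]; subst; simpl; try lra; contradiction|].
    split; [intros q1 q2 Hq1 Hq2 Hne y0; repeat destruct Hq1 as [Hq1|Hq1];
      repeat destruct Hq2 as [Hq2|Hq2]; subst; simpl; try lra; try contradiction; congruence|].
    intros y Hy. destruct (Rle_dec y v').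
    + exists (u,v',x); simpl; split; auto; lra.
    + exists (v',v,v); simpl; split; auto; lra.
  - split; [repeat constructor; simpl; auto|].
    split; [intros q Hq; repeat destruct Hq as [Hq|Hq]; subst; simpl; try lra; contradiction|].
    split; [intros q1 q2 Hq1 Hq2 Hne y0; repeat destruct Hq1 as [Hq1|Hq1];
      repeat destruct Hq2 as [Hq2|Hq2]; subst; simpl; try lra; try contradiction; congruence|].
    intros y Hy. exists (u,v,x); simpl; split; auto.
Qed.

Lemma pdec_cases (Q : Prop) : (pdec Q = true /\ Q) \/ (pdec Q = false /\ ~ Q).
Proof. unfold pdec. destruct (excluded_middle_informative Q); auto. Qed.

Lemma ext_in E g x : E x -> ext E g x = 0.
Proof. intros H. unfold ext. destruct (pdec_cases (E x)) as [[-> _]|[_ Hn]]; tauto. Qed.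

Lemma ext_out E g x : ~ E x -> ext E g x = g x.
Proof. intros H. unfold ext. destruct (pdec_cases (E x)) as [[_ Hy]|[-> _]]; tauto. Qed.

Definition pickR (E : R -> Prop) (u w : R) : R :=
  epsilon (inhabits 0) (fun y => u < y < w /\ ~ E y).

Lemma pickR_spec E u w : null_set E -> u < w -> u < pickR E u w < w /\ ~ E (pickR E u w).
Proof.
  intros HN Huw. unfold pickR. apply epsilon_spec.
  destruct (null_no_interval E u w HN Huw) as [y Hy]. exists y; auto.
Qed.

Definition Sp (E : R -> Prop) (dB eta : R -> R) (p : R*R*R) : list (R*R*R) :=
  if pdec (E (pt p)) then p :: nil else
  split3 (pdec (E (pu p))) (pdec (E (pv p))) (pu p)
    (pickR E (pu p) (Rmin (pt p) (Rmin (pu p + dB (pu p)) (pu p + eta (pt p)))))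
    (pt p)
    (pickR E (Rmax (pt p) (Rmax (pv p - dB (pv p)) (pv p - eta (pt p)))) (pv p))
    (pv p).

Lemma lsum_scal {A} (k : R) (h : A -> R) l : lsum (fun p => k * h p) l = k * lsum h l.
Proof. induction l. unfold lsum; simpl; lra. rewrite !lsum_cons, IHl. lra. Qed.

Lemma Hkey_lemma E dB eta u v x : null_set E -> ~ E x -> u <= x <= v ->
  0 < dB u -> 0 < dB v -> 0 < eta x ->
  exists u' v', Sp E dB eta (u,v,x) = split3 (pdec (E u)) (pdec (E v)) u u' x v' v /\
   (pdec (E u) = true -> u < u' < x /\ u' < u + dB u) /\
   (pdec (E v) = true -> x < v' < v /\ v - dB v < v') /\
   (~ E (if pdec (E u) then u' else u) /\ u <= (if pdec (E u) then u' else u) <= x /\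
      (if pdec (E u) then u' else u) - u < eta x) /\
   (~ E (if pdec (E v) then v' else v) /\ x <= (if pdec (E v) then v' else v) <= v /\
      v - (if pdec (E v) then v' else v) < eta x) /\
   (pdec (E u) = true -> E u) /\ (pdec (E v) = true -> E v).
Proof.
  intros HN Hx Huv HdBu HdBv Heta.
  set (u' := pickR E u (Rmin x (Rmin (u + dB u) (u + eta x)))).
  set (v' := pickR E (Rmax x (Rmax (v - dB v) (v - eta x))) v).
  exists u', v'. split.
  { unfold Sp, pu, pv, pt; simpl.
    destruct (pdec_cases (E x)) as [[_ Hc]|[-> _]]; [tauto|reflexivity]. }
  assert (HU : E u -> u < u' < x /\ u' < u + dB u /\ u' - u < eta x /\ ~ E u').
  { intros HEu. assert (u <> x) by (intros ->; auto).
    assert (Hw : u < Rmin x (Rmin (u + dB u) (u + eta x))).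
    { apply Rmin_glb_lt; [lra|]. apply Rmin_glb_lt; lra. }
    destruct (pickR_spec E _ _ HN Hw) as [[H1 H2] H3]. fold u' in H1, H2, H3.
    pose proof (Rmin_l x (Rmin (u + dB u) (u + eta x))).
    pose proof (Rmin_r x (Rmin (u + dB u) (u + eta x))).
    pose proof (Rmin_l (u + dB u) (u + eta x)).
    pose proof (Rmin_r (u + dB u) (u + eta x)). repeat split; auto; lra. }
  assert (HV : E v -> x < v' < v /\ v - dB v < v' /\ v - v' < eta x /\ ~ E v').
  { intros HEv. assert (v <> x) by (intros ->; auto).
    assert (Hw : Rmax x (Rmax (v - dB v) (v - eta x)) < v).
    { apply Rmax_lub_lt; [lra|]. apply Rmax_lub_lt; lra. }
    destruct (pickR_spec E _ _ HN Hw) as [[H1 H2] H3]. fold v' in H1, H2, H3.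
    pose proof (Rmax_l x (Rmax (v - dB v) (v - eta x))).
    pose proof (Rmax_r x (Rmax (v - dB v) (v - eta x))).
    pose proof (Rmax_l (v - dB v) (v - eta x)).
    pose proof (Rmax_r (v - dB v) (v - eta x)). repeat split; auto; lra. }
  destruct (pdec_cases (E u)) as [[-> HEu]|[-> HEu]];
  destruct (pdec_cases (E v)) as [[-> HEv]|[-> HEv]].
  all: repeat split; intros; try discriminate; auto;
    try (destruct (HU HEu) as [? [? [? ?]]]); try (destruct (HV HEv) as [? [? [? ?]]]); try lra; auto.
Qed.

Theorem theorem1 (a b : R) (E : R -> Prop) (F f : R -> R) (Re : R) :
  a < b ->
  (forall x, E x -> a <= x <= b) ->
  null_set E ->
  ~ E a -> ~ E b ->
  deriv_on (fun x => a <= x <= b /\ ~ E x) F f ->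
  BS_delta a b E F Re ->
  exists I, GR_integral a b (ext E f) I /\ F b - F a = I + Re.
Proof.
  intros Hab HEab HN HEa HEb Hder HBS.
  exists (F b - F a - Re). split; [|ring].
  intros eps Heps.
  destruct (HBS (eps/4)) as [dB [HdB HBSP]]; [lra|].
  set (e2 := eps / (4 * (b - a))).
  assert (He2 : 0 < e2) by (unfold e2; apply Rdiv_lt_0_compat; lra).
  set (Pd := fun x d => 0 < d /\ forall y, (a <= y <= b /\ ~ E y) -> Rabs (y - x) < d ->
         Rabs (F y - F x - f x * (y - x)) <= e2 * Rabs (y - x)).
  set (delx := fun x => epsilon (inhabits 0) (Pd x)).
  assert (Hdelx : forall x, (a <= x <= b /\ ~ E x) -> Pd x (delx x)).
  { intros x Hx. unfold delx. apply epsilon_spec.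
    destruct (Hder x Hx e2 He2) as [d Hd]. exists d. exact Hd. }
  set (delta := fun x => if pdec (a <= x <= b /\ ~ E x) then Rmin (dB x) (delx x) else dB x).
  exists delta. split.
  { intros x Hx. unfold delta.
    destruct (pdec_cases (a <= x <= b /\ ~ E x)) as [[-> HD]|[-> HD]].
    - apply Rmin_pos; [apply HdB; auto|apply (Hdelx x HD)].
    - apply HdB; auto. }
  intros P HP Hfine. apply tp_iff in HP.
  assert (Hdle : forall x, delta x <= dB x).
  { intros x. unfold delta. destruct (pdec _); [apply Rmin_l|lra]. }
  assert (Hdder : forall x, (a <= x <= b /\ ~ E x) -> delta x <= delx x).
  { intros x Hx. unfold delta. destruct (pdec_cases (a <= x <= b /\ ~ E x)) as [[-> _]|[_ Hc]];
      [apply Rmin_r|tauto]. }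
  set (N := length P).
  set (c := eps / 4 / (INR N + 1)).
  assert (HN1 : 0 < INR N + 1) by (pose proof (pos_INR N); lra).
  assert (Hc : 0 < c) by (unfold c; apply Rdiv_lt_0_compat; lra).
  set (eta := fun x => c / (2 * (Rabs (f x) + 1))).
  assert (Heta : forall x, 0 < eta x).
  { intros x. unfold eta. apply Rdiv_lt_0_compat; auto. pose proof (Rabs_pos (f x)); lra. }
  assert (Heta2 : forall x, eta x * (2 * (Rabs (f x) + 1)) = c).
  { intros x. unfold eta. field. pose proof (Rabs_pos (f x)); lra. }
  set (S := Sp E dB eta).
  set (P' := flat_map S P).
  destruct HP as [HP1 [HP2 [HP3 HP4]]].
  assert (HPab : forall p, In p P -> a <= pu p /\ pv p <= b).
  { intros q Hq. destruct (HP1 q Hq). split.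
    - apply (proj2 (HP4 (pu q))). exists q. split; auto. lra.
    - apply (proj2 (HP4 (pv q))). exists q. split; auto. lra. }
  assert (HPf : forall p, In p P -> pt p - delta (pt p) < pu p /\ pv p < pt p + delta (pt p)).
  { intros [[u v] x] Hp. apply (Hfine u v x Hp). }
  assert (Hkey : forall u v x, In (u,v,x) P -> ~ E x ->
    exists u' v', S (u,v,x) = split3 (pdec (E u)) (pdec (E v)) u u' x v' v /\
     (pdec (E u) = true -> u < u' < x /\ u' < u + dB u) /\
     (pdec (E v) = true -> x < v' < v /\ v - dB v < v') /\
     (~ E (if pdec (E u) then u' else u) /\ u <= (if pdec (E u) then u' else u) <= x /\
        (if pdec (E u) then u' else u) - u < eta x) /\
     (~ E (if pdec (E v) then v' else v) /\ x <= (if pdec (E v) then v' else v) <= v /\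
        v - (if pdec (E v) then v' else v) < eta x) /\
     (pdec (E u) = true -> E u) /\ (pdec (E v) = true -> E v)).
  { intros u v x Hp Hx. destruct (HP1 _ Hp) as [H1 H2]. destruct (HPab _ Hp) as [H3 H4].
    unfold pu, pv, pt in *; simpl in *.
    apply Hkey_lemma; auto; try apply HdB; lra. }
  assert (HSE : forall u v x, E x -> S (u,v,x) = (u,v,x) :: nil).
  { intros u v x Hx. unfold S, Sp, pt; simpl.
    destruct (pdec_cases (E x)) as [[-> _]|[_ Hc']]; tauto. }
  assert (HP' : TP a b P').
  { apply refine_TP; [split; auto|].
    intros [[u v] x] Hp. destruct (HP1 _ Hp) as [H1 H2]. unfold pu, pv, pt in H1, H2; simpl in H1, H2.
    destruct (classic (E x)) as [Hx|Hx].
    - rewrite HSE; auto. split; [repeat constructor; simpl; auto|].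
      split; [intros q [<-|[]]; unfold pu, pv, pt; simpl; lra|].
      split; [intros q1 q2 [<-|[]] [<-|[]] Hne; congruence|].
      intros y Hy. exists (u,v,x). simpl; auto.
    - destruct (Hkey u v x Hp Hx) as [u' [v' [-> [Hu [Hv _]]]]].
      apply split3_props; auto; intros; [apply Hu|apply Hv]; auto. }
  assert (HfineB : fine dB P').
  { intros u0 v0 x0 Hq. apply in_flat_map in Hq. destruct Hq as [[[u v] x] [Hp Hq]].
    destruct (HPf _ Hp) as [Hf1 Hf2]. destruct (HPab _ Hp) as [Ha1 Ha2].
    destruct (HP1 _ Hp) as [H1 H2].
    unfold pu, pv, pt in *; simpl in *.
    pose proof (Hdle x).
    destruct (classic (E x)) as [Hx|Hx].
    - rewrite HSE in Hq; auto. destruct Hq as [Hq|[]]. inversion Hq; subst. lra.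
    - destruct (Hkey u v x Hp Hx) as [u' [v' [HS [Hu [Hv [Huu [Hvv _]]]]]]].
      rewrite HS in Hq. apply in_split3 in Hq.
      destruct Hq as [[He Hq]|[Hq|[He Hq]]]; injection Hq as -> -> ->.
      + specialize (Hu He). assert (0 < dB u) by (apply HdB; lra). lra.
      + lra.
      + specialize (Hv He). assert (0 < dB v) by (apply HdB; lra). lra. }
  pose proof (HBSP P' (proj2 (tp_iff a b P') HP') HfineB) as HBS'.
  set (G := ext E F).
  assert (Htele : lsum (fun q => G (pv q) - G (pu q)) P' = F b - F a).
  { rewrite (telescope G (length P') P' a b eq_refl Hab HP'). unfold G.
    rewrite !ext_out; auto. }
  assert (Hlen : lsum (fun q => pv q - pu q) P' = b - a).
  { apply (telescope (fun y => y) (length P') P' a b eq_refl Hab HP'). }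
  set (rie := fun q : R*R*R => ext E f (pt q) * (pv q - pu q)).
  set (rt := fun q : R*R*R => if pdec ((exists y, pu q <= y <= pv q /\ E y) /\ E (pt q))
                               then G (pv q) - G (pu q) else 0).
  assert (Hrs : restr_sum E G P' = lsum rt P') by reflexivity.
  assert (Hri : riemann_sum (ext E f) P = lsum rie P) by reflexivity.
  assert (HA : Rabs (lsum rie P - lsum rie P') <= INR N * c).
  { unfold P'. rewrite lsum_flat_map, lsum_minus.
    eapply Rle_trans; [apply lsum_abs|]. unfold N. rewrite <- (lsum_const c P).
    apply lsum_le. intros [[u v] x] Hp.
    destruct (classic (E x)) as [Hx|Hx].
    - rewrite HSE; auto. rewrite lsum_cons. unfold lsum; simpl.
      replace (rie (u, v, x) - (rie (u, v, x) + 0)) with 0 by ring. rewrite Rabs_R0. lra.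
    - destruct (Hkey u v x Hp Hx) as [u' [v' [HS [Hu [Hv [Huu [Hvv [HEu HEv]]]]]]]].
      rewrite HS, lsum_split3.
      assert (Hmid : rie ((if pdec (E u) then u' else u), (if pdec (E v) then v' else v), x)
          = f x * ((if pdec (E v) then v' else v) - (if pdec (E u) then u' else u))).
      { unfold rie, pu, pv, pt; simpl. rewrite ext_out; auto. }
      assert (Hl : (if pdec (E u) then rie (u,u',u) else 0) = 0).
      { destruct (pdec (E u)) eqn:Hd; auto. unfold rie, pt; simpl. rewrite ext_in; auto. ring. }
      assert (Hr : (if pdec (E v) then rie (v',v,v) else 0) = 0).
      { destruct (pdec (E v)) eqn:Hd; auto. unfold rie, pt; simpl. rewrite ext_in; auto. ring. }
      rewrite Hmid, Hl, Hr.
      assert (Hrp : rie (u,v,x) = f x * (v - u)).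
      { unfold rie, pu, pv, pt; simpl. rewrite ext_out; auto. }
      rewrite Hrp.
      set (uu := if pdec (E u) then u' else u) in *.
      set (vv := if pdec (E v) then v' else v) in *.
      replace (f x * (v - u) - (0 + f x * (vv - uu) + 0)) with (f x * ((uu - u) + (v - vv))) by ring.
      rewrite Rabs_mult. rewrite (Rabs_pos_eq (uu - u + (v - vv))) by lra.
      pose proof (Heta2 x). pose proof (Rabs_pos (f x)). pose proof (Heta x).
      apply Rle_trans with (Rabs (f x) * (2 * eta x)).
      + apply Rmult_le_compat_l; lra.
      + nra. }
  assert (HB : Rabs (lsum (fun q => (G (pv q) - G (pu q)) - rt q) P' - lsum rie P') <= e2 * (b - a)).
  { rewrite lsum_minus. eapply Rle_trans; [apply lsum_abs|]. rewrite <- Hlen, <- lsum_scal.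
    apply lsum_le. intros q Hq.
    destruct HP' as [HQ1 _]. destruct (HQ1 q Hq) as [Hq1 Hq2].
    apply in_flat_map in Hq. destruct Hq as [[[u v] x] [Hp Hq]].
    destruct (classic (E (pt q))) as [Hx|Hx].
    - unfold rt. destruct (pdec_cases ((exists y, pu q <= y <= pv q /\ E y) /\ E (pt q)))
        as [[-> _]|[_ Hc']].
      + unfold rie. rewrite ext_in; auto.
        replace (G (pv q) - G (pu q) - (G (pv q) - G (pu q)) - 0 * (pv q - pu q)) with 0 by ring.
        rewrite Rabs_R0. nra.
      + exfalso. apply Hc'. split; auto. exists (pt q). split; auto.
    - unfold rt. destruct (pdec_cases ((exists y, pu q <= y <= pv q /\ E y) /\ E (pt q)))
        as [[_ [_ Hc']]|[-> _]]; [tauto|].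
      destruct (classic (E x)) as [HEx|HEx].
      { rewrite HSE in Hq; auto. destruct Hq as [<-|[]]. unfold pt in Hx; simpl in Hx. tauto. }
      destruct (Hkey u v x Hp HEx) as [u' [v' [HS [Hu [Hv [Huu [Hvv [HEu HEv]]]]]]]].
      rewrite HS in Hq. apply in_split3 in Hq.
      destruct Hq as [[He ->]|[->|[He ->]]].
      + exfalso. apply Hx. unfold pt; simpl. auto.
      + set (uu := if pdec (E u) then u' else u) in *.
        set (vv := if pdec (E v) then v' else v) in *.
        unfold rie, G, pu, pv, pt; simpl. rewrite !ext_out; try tauto.
        destruct (HPab _ Hp) as [Ha1 Ha2]. destruct (HPf _ Hp) as [Hf1 Hf2].
        destruct (HP1 _ Hp) as [H1 H2].
        unfold pu, pv, pt in *; simpl in *.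
        assert (HDx : a <= x <= b /\ ~ E x) by (split; [lra|auto]).
        destruct (Hdelx x HDx) as [_ Hd]. pose proof (Hdder x HDx).
        assert (A1 := Hd uu ltac:(split; [lra|tauto]) ltac:(rewrite Rabs_left1 by lra; lra)).
        assert (A2 := Hd vv ltac:(split; [lra|tauto]) ltac:(rewrite Rabs_pos_eq by lra; lra)).
        rewrite (Rabs_left1 (uu - x)) in A1 by lra. rewrite (Rabs_pos_eq (vv - x)) in A2 by lra.
        replace (F vv - F uu - 0 - f x * (vv - uu)) with
          ((F vv - F x - f x * (vv - x)) - (F uu - F x - f x * (uu - x))) by ring.
        eapply Rle_trans; [apply Rabs_triang|]. rewrite Rabs_Ropp. lra.
      + exfalso. apply Hx. unfold pt; simpl. auto. }
  rewrite Hri.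
  assert (HNc : INR N * c < eps / 4).
  { unfold c. apply Rmult_lt_reg_r with (INR N + 1); auto.
    replace (INR N * (eps / 4 / (INR N + 1)) * (INR N + 1)) with (INR N * (eps / 4)) by (field; lra).
    nra. }
  assert (He2b : e2 * (b - a) = eps / 4) by (unfold e2; field; lra).
  rewrite <- lsum_minus in HB. rewrite Htele in HB. rewrite <- Hrs in HB.
  fold G in HBS'.
  set (X := lsum rie P) in *. set (Y := lsum rie P') in *. set (Z := restr_sum E G P') in *.
  assert (T1 := Rle_abs (X - Y)). assert (T2 := Rle_abs (-(X - Y))). rewrite Rabs_Ropp in T2.
  assert (T3 := Rle_abs (F b - F a - Z - Y)). assert (T4 := Rle_abs (-(F b - F a - Z - Y))).
  rewrite Rabs_Ropp in T4.
  assert (T5 := Rle_abs (Z - Re)). assert (T6 := Rle_abs (-(Z - Re))). rewrite Rabs_Ropp in T6.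
  apply Rabs_def1; lra.
Qed.
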